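(* Let $k\ge 3$ and let $p,p'$ be two POPs of size $k$ having the same set $I$ of isolated vertices, with $k-2,k-1,k\notin I$. Suppose that in both $p$ and $p'$, each of the labels $k-1$ and $k$ is greater than every label $x\in[k-2]\setminus I$. Suppose that the subposets of $p$ and $p'$ induced by $[k-2]\setminus I$ coincide, and that $k<_p k-1$ while $k-1<_{p'}k$. Then $p\sim p'$.
   Context: A partially ordered pattern (POP) $p$ of size $k$ is a partial order $\le_p$ on $[k]=\{1,\dots,k\}$. A permutation $\pi=\pi_1\cdots\pi_n$ contains $p$ if there are indices $i_1<\dots<i_k$ with $\pi_{i_j}<\pi_{i_m}$ whenever $j<_p m$; otherwise it avoids $p$. $\mathfrak S_n(p)$ is the set of permutations of $[n]$ avoiding $p$, and $p\sim q$ (Wilf-equivalence) means $|\mathfrak S_n(p)|=|\mathfrak S_n(q)|$ for all $n\ge 1$. A vertex is isolated if it is comparable to no other vertex. *)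

(* Defs.v *)
From mathcomp Require Import all_boot all_order all_fingroup.
Set Implicit Arguments. Unset Strict Implicit. Unset Printing Implicit Defensive.

(* A POP of size k is encoded by its STRICT order relation on 'I_k:
   [p x y] means x <_p y.  Label a in [k] = {1..k} corresponds to the
   ordinal of value a-1. *)
Definition is_pop (k : nat) (p : rel 'I_k) : Prop :=
  irreflexive p /\ transitive p.

Definition isolated (k : nat) (p : rel 'I_k) (x : 'I_k) : Prop :=
  forall y : 'I_k, y != x -> ~~ p x y /\ ~~ p y x.

Definition contains (k n : nat) (p : rel 'I_k) (pi : 'S_n) : bool :=
  [exists f : {ffun 'I_k -> 'I_n},
    [forall j : 'I_k, forall m : 'I_k,
       ((j < m)%N ==> (f j < f m)%N) && (p j m ==> (pi (f j) < pi (f m))%N)]].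

Definition avoids (k n : nat) (p : rel 'I_k) (pi : 'S_n) : bool :=
  ~~ contains p pi.

Definition num_avoiders (k n : nat) (p : rel 'I_k) : nat :=
  #|[set pi : 'S_n | avoids p pi]|.

Definition wilf_equiv (k : nat) (p q : rel 'I_k) : Prop :=
  forall n : nat, (1 <= n)%N -> num_avoiders n p = num_avoiders n q.

(* Main.v *)
Require Import Defs.
From mathcomp Require Import all_boot all_order all_fingroup.
From mathcomp Require Import zify.
From Stdlib Require Import Classical ClassicalEpsilon.
Set Implicit Arguments. Unset Strict Implicit. Unset Printing Implicit Defensive.

Definition inR n (F : Type) (occ : 'S_n -> F -> nat -> nat -> Prop) (s : 'S_n) (i v : nat) : Prop :=
  exists f e t, occ s f e t /\ e <= i /\ t <= v.

Definition A1 n F (W : F -> 'I_n -> Prop) (occ : 'S_n -> F -> nat -> nat -> Prop) :=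
  forall s f e t, occ s f e t -> forall i, W f i -> i < e /\ s i < t.
Definition A2 n F (W : F -> 'I_n -> Prop) (occ : 'S_n -> F -> nat -> nat -> Prop) :=
  forall (s s' : 'S_n) f e t, occ s f e t -> (forall i, W f i -> s i = s' i) -> occ s' f e t.

Lemma inR_mono n F (occ : 'S_n -> F -> nat -> nat -> Prop) s i v i' v' :
  inR occ s i v -> i <= i' -> v <= v' -> inR occ s i' v'.
Proof.
move=> [f [e [t [ho [he ht]]]]] hi hv; exists f, e, t; split => //; lia.
Qed.

Lemma reduce n F W (occ : 'S_n -> F -> nat -> nat -> Prop) (h1 : A1 W occ) s :
  forall N f e t, e + t = N -> occ s f e t ->
  exists f' e' t', occ s f' e' t' /\ e' <= e /\ t' <= t /\
     forall i, W f' i -> ~ inR occ s i (s i).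
Proof.
elim/ltn_ind => N IH f e t hN ho.
case: (classic (exists i, W f i /\ inR occ s i (s i))) =>
  [[i [hw [f0 [e0 [t0 [ho0 [he0 ht0]]]]]]] | hn].
- have [hie hst] := h1 _ _ _ _ ho _ hw.
  have [f' [e' [t' [ho' [he' [ht' hW]]]]]] := IH (e0 + t0) ltac:(lia) f0 e0 t0 erefl ho0.
  exists f', e', t'; repeat split => //; lia.
- exists f, e, t; split; first done; split; first done; split; first done.
  by move=> i hw hi; apply: hn; exists i.
Qed.

Definition eqv n F (occ : 'S_n -> F -> nat -> nat -> Prop) (s s' : 'S_n) :=
  (forall i v, inR occ s i v <-> inR occ s' i v) /\
  (forall i : 'I_n, ~ inR occ s i (s i) \/ ~ inR occ s' i (s' i) -> s i = s' i).

Lemma eqv_refl n F (occ : 'S_n -> F -> nat -> nat -> Prop) s : eqv occ s s.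
Proof. by split. Qed.

Lemma eqv_sym n F (occ : 'S_n -> F -> nat -> nat -> Prop) s s' : eqv occ s s' -> eqv occ s' s.
Proof.
move=> [h1 h2]; split => [i v|i hi]; first by split => /h1.
by rewrite h2 //; case: hi; tauto.
Qed.

Lemma eqv_trans n F (occ : 'S_n -> F -> nat -> nat -> Prop) s1 s2 s3 :
  eqv occ s1 s2 -> eqv occ s2 s3 -> eqv occ s1 s3.
Proof.
move=> [a1 a2] [b1 b2]; split => [i v|i hi]; first by rewrite a1 b1.
case: hi => hi.
- have e1 := a2 i (or_introl hi).
  rewrite e1 b2 //; left => h; apply: hi; rewrite e1; exact/a1.
- have e2 := b2 i (or_intror hi).
  rewrite -e2 a2 //; right => h; apply: hi; rewrite -e2; exact/b1.
Qed.

Lemma step n F W (occ : 'S_n -> F -> nat -> nat -> Prop) (h1 : A1 W occ) (h2 : A2 W occ)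
  s (a b : 'I_n) :
  inR occ s a (s a) -> inR occ s b (s b) -> inR occ s a (s b) -> inR occ s b (s a) ->
  eqv occ s (tperm a b * s)%g.
Proof.
move=> haa hbb hab hba.
set s' := (tperm a b * s)%g.
have Es' : forall i, s' i = s (tperm a b i) by move=> i; rewrite permM.
have Hsa : s' a = s b by rewrite Es' tpermL.
have Hsb : s' b = s a by rewrite Es' tpermR.
have Hso : forall i, i != a -> i != b -> s' i = s i.
  by move=> i ha hb; rewrite Es' tpermD // eq_sym.
have inc1 : forall i v, inR occ s i v -> inR occ s' i v.
  move=> i v [f [e [t [ho [he ht]]]]].
  have [f' [e' [t' [ho' [he' [ht' hW]]]]]] := reduce h1 erefl ho.
  exists f', e', t'; split; last by lia.
  apply: (h2 _ _ _ _ _ ho') => j hw; have hn := hW j hw.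
  rewrite Hso //; apply/eqP => hj; subst j; contradiction.
have inc2 : forall i v, inR occ s' i v -> inR occ s i v.
  move=> i v [f [e [t [ho [he ht]]]]].
  have [f' [e' [t' [ho' [he' [ht' hW]]]]]] := reduce h1 erefl ho.
  exists f', e', t'; split; last by lia.
  apply: (h2 _ _ _ _ _ ho') => j hw; have hn := hW j hw.
  rewrite Hso //; apply/eqP => hj; subst j.
  + by apply: hn; rewrite Hsa; apply: inc1.
  + by apply: hn; rewrite Hsb; apply: inc1.
split => [i v|i hi]; first by split; [apply: inc1|apply: inc2].
have [hia|hia] := eqVneq i a.
  subst i; exfalso; case: hi => hi; apply: hi => //.
  by rewrite Hsa; apply: inc1.
have [hib|hib] := eqVneq i b.
  subst i; exfalso; case: hi => hi; apply: hi => //.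
  by rewrite Hsb; apply: inc1.
by rewrite Hso.
Qed.

Definition bad21 n F (occ : 'S_n -> F -> nat -> nat -> Prop) (s : 'S_n) :=
  exists a b : 'I_n, a < b /\ inR occ s a (s b) /\ s b < s a.
Definition bad12 n F (occ : 'S_n -> F -> nat -> nat -> Prop) (s : 'S_n) :=
  exists a b : 'I_n, a < b /\ inR occ s a (s a) /\ s a < s b.

Definition Spot n (s : 'S_n) := \sum_(i < n) i * s i.

Lemma sum2 n (a b : 'I_n) (f : 'I_n -> nat) : a != b ->
  \sum_(i < n) f i = f a + f b + \sum_(i < n | (i != a) && (i != b)) f i.
Proof.
move=> hab; have hba : b != a by rewrite eq_sym.
by rewrite (bigD1 a) //= (bigD1 b) //= addnA.
Qed.

Lemma swapS n (s : 'S_n) (a b : 'I_n) : a != b ->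
  Spot (tperm a b * s)%g + (a * s a + b * s b) = Spot s + (a * s b + b * s a).
Proof.
move=> hab.
rewrite /Spot (sum2 _ hab) [X in _ = X + _](sum2 _ hab).
rewrite !permM tpermL tpermR.
rewrite (eq_bigr (fun i : 'I_n => i * s i)); first by rewrite [LHS]addnAC [RHS]addnAC [X in _ = X + _]addnC.
by move=> i /andP [] ha hb; rewrite permM tpermD // eq_sym.
Qed.

Lemma Spot_bound n (s : 'S_n) : Spot s <= n * (n * n).
Proof.
rewrite /Spot -[X in _ <= X * _]card_ord -sum_nat_const.
apply: leq_sum => i _; apply: leq_mul; apply: ltnW; exact: ltn_ord.
Qed.

Lemma exist21 n F W (occ : 'S_n -> F -> nat -> nat -> Prop) (h1 : A1 W occ) (h2 : A2 W occ) :
  forall s, exists s', eqv occ s s' /\ ~ bad21 occ s'.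
Proof.
suff: forall N s, n * (n * n) - Spot s = N -> exists s', eqv occ s s' /\ ~ bad21 occ s'.
  by move=> H s; exact: H erefl.
elim/ltn_ind => N IH s hN.
case: (classic (bad21 occ s)) => [[a [b [hab [hin hv]]]]|hn]; last first.
  by exists s; split => //; exact: eqv_refl.
have hne : a != b by rewrite neq_ltn hab.
have E := step h1 h2 (a := a) (b := b) (s := s).
have /E {}E : inR occ s a (s a) by apply: inR_mono hin _ _ => //; lia.
have /E {}E : inR occ s b (s b) by apply: inR_mono hin _ _ => //; lia.
have /E {}E : inR occ s a (s b) by [].
have /E {}E : inR occ s b (s a) by apply: inR_mono hin _ _ => //; lia.
have hS := swapS s hne.
have hB := Spot_bound (tperm a b * s)%g.
have hlt : a * s a + b * s b < a * s b + b * s a by nia.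
have [s'' [E2 hb]] := IH (n * (n * n) - Spot (tperm a b * s)%g) ltac:(lia) _ erefl.
exists s''; split => //; exact: eqv_trans E E2.
Qed.

Lemma exist12 n F W (occ : 'S_n -> F -> nat -> nat -> Prop) (h1 : A1 W occ) (h2 : A2 W occ) :
  forall s, exists s', eqv occ s s' /\ ~ bad12 occ s'.
Proof.
suff: forall N s, Spot s = N -> exists s', eqv occ s s' /\ ~ bad12 occ s'.
  by move=> H s; exact: H erefl.
elim/ltn_ind => N IH s hN.
case: (classic (bad12 occ s)) => [[a [b [hab [hin hv]]]]|hn]; last first.
  by exists s; split => //; exact: eqv_refl.
have hne : a != b by rewrite neq_ltn hab.
have E := step h1 h2 (a := a) (b := b) (s := s).
have /E {}E : inR occ s a (s a) by [].
have /E {}E : inR occ s b (s b) by apply: inR_mono hin _ _ => //; lia.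
have /E {}E : inR occ s a (s b) by apply: inR_mono hin _ _ => //; lia.
have /E {}E : inR occ s b (s a) by apply: inR_mono hin _ _ => //; lia.
have hS := swapS s hne.
have hlt : a * s b + b * s a < a * s a + b * s b by nia.
have [s'' [E2 hb]] := IH (Spot (tperm a b * s)%g) ltac:(lia) _ erefl.
exists s''; split => //; exact: eqv_trans E E2.
Qed.

Lemma core21 n F (occ : 'S_n -> F -> nat -> nat -> Prop) (s t : 'S_n) :
  eqv occ s t -> ~ bad21 occ t -> forall c : 'I_n,
  (forall i : 'I_n, i < c -> s i = t i) -> s c < t c -> False.
Proof.
move=> [E1 E2] hb c hc hlt.
set d := (t^-1)%g (s c).
have td : t d = s c by rewrite permKV.
have hcd : c < d.
  case: (ltngtP c d) => // h.
    have := hc d h; rewrite td => /perm_inj hdc.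
    by move: h; rewrite hdc ltnn.
  have hcd : c = d by apply: val_inj.
  by rewrite -hcd in td; move: hlt; rewrite td ltnn.
have hin : inR occ s c (s c).
  apply: NNPP => hn; have := E2 c (or_introl hn) => he.
  by move: hlt; rewrite he ltnn.
apply: hb; exists c, d; split => //; split.
  by rewrite td; apply/E1.
by rewrite td.
Qed.

Lemma core12 n F (occ : 'S_n -> F -> nat -> nat -> Prop) (s t : 'S_n) :
  eqv occ s t -> ~ bad12 occ s -> forall c : 'I_n,
  (forall i : 'I_n, i < c -> s i = t i) -> s c < t c -> False.
Proof.
move=> [E1 E2] hb c hc hlt.
set d := (s^-1)%g (t c).
have sd : s d = t c by rewrite permKV.
have hcd : c < d.
  case: (ltngtP c d) => // h.
    have := hc d h; rewrite sd => /esym /perm_inj hdc.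
    by move: h; rewrite hdc ltnn.
  have hcd : c = d by apply: val_inj.
  by rewrite -hcd in sd; move: hlt; rewrite sd ltnn.
have hin : inR occ s c (s c).
  apply: NNPP => hn; have := E2 c (or_introl hn) => he.
  by move: hlt; rewrite he ltnn.
apply: hb; exists c, d; split => //; split => //.
by rewrite sd.
Qed.

Lemma min_diff n (s t : 'S_n) : s <> t ->
  exists c : 'I_n, s c != t c /\ forall i : 'I_n, i < c -> s i = t i.
Proof.
move=> hne.
have [i0 hi0] : exists i, s i != t i.
  apply: NNPP => h; apply: hne; apply/permP => i.
  by apply/eqP; apply: NNPP => hi; apply: h; exists i; apply/negP.
case: (arg_minnP (fun i : 'I_n => nat_of_ord i) (P := fun i => s i != t i) hi0) => c hc hmin.
exists c; split => // i hi; apply/eqP; apply: NNPP => /negP hn.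
by have := hmin i hn; rewrite leqNgt hi.
Qed.

Lemma uniq21 n F (occ : 'S_n -> F -> nat -> nat -> Prop) (s t : 'S_n) :
  eqv occ s t -> ~ bad21 occ s -> ~ bad21 occ t -> s = t.
Proof.
move=> E hs ht; apply: NNPP => hne.
have [c [hc hmin]] := min_diff hne.
have : (s c : nat) != t c by [].
rewrite neq_ltn => /orP [] h.
  exact: (@core21 _ _ _ _ _ E ht c hmin h).
apply: (@core21 _ _ _ _ _ (eqv_sym E) hs c _ h) => i hi; exact/esym/hmin.
Qed.

Lemma uniq12 n F (occ : 'S_n -> F -> nat -> nat -> Prop) (s t : 'S_n) :
  eqv occ s t -> ~ bad12 occ s -> ~ bad12 occ t -> s = t.
Proof.
move=> E hs ht; apply: NNPP => hne.
have [c [hc hmin]] := min_diff hne.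
have : (s c : nat) != t c by [].
rewrite neq_ltn => /orP [] h.
  exact: (@core12 _ _ _ _ _ E hs c hmin h).
apply: (@core12 _ _ _ _ _ (eqv_sym E) ht c _ h) => i hi; exact/esym/hmin.
Qed.

Lemma inj_count n (P1 P2 : pred 'S_n) (R : 'S_n -> 'S_n -> Prop)
  (Rsym : forall s t, R s t -> R t s) (Rtr : forall s t u, R s t -> R t u -> R s u)
  (ex2 : forall s, exists s', R s s' /\ P2 s')
  (u1 : forall s t, R s t -> P1 s -> P1 t -> s = t) :
  #|[set s | P1 s]| <= #|[set s | P2 s]|.
Proof.
pose g s := proj1_sig (constructive_indefinite_description _ (ex2 s)).
have hg : forall s, R s (g s) /\ P2 (g s) by move=> s; exact: proj2_sig (constructive_indefinite_description _ (ex2 s)).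
rewrite -(@card_in_imset _ _ g).
  apply: subset_leq_card; apply/subsetP => x /imsetP [y _ ->].
  by rewrite inE; case: (hg y).
move=> x y; rewrite !inE => hx hy he.
apply: u1 hx hy.
apply: Rtr (proj1 (hg x)) _; rewrite he; exact: Rsym (proj1 (hg y)).
Qed.

Lemma gen_count n F W (occ : 'S_n -> F -> nat -> nat -> Prop) (h1 : A1 W occ) (h2 : A2 W occ)
  (P1 P2 : pred 'S_n) :
  (forall s, P1 s <-> ~ bad21 occ s) -> (forall s, P2 s <-> ~ bad12 occ s) ->
  #|[set s | P1 s]| = #|[set s | P2 s]|.
Proof.
move=> H1 H2; apply/eqP; rewrite eqn_leq; apply/andP; split.
- apply: (inj_count (R := eqv occ)).
  + exact: eqv_sym.
  + exact: eqv_trans.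
  + move=> s; have [s' [E h]] := exist12 h1 h2 s; exists s'; split => //; exact/H2.
  + move=> s t E a b; apply: uniq21 E _ _; exact/H1.
- apply: (inj_count (R := eqv occ)).
  + exact: eqv_sym.
  + exact: eqv_trans.
  + move=> s; have [s' [E h]] := exist21 h1 h2 s; exists s'; split => //; exact/H1.
  + move=> s t E a b; apply: uniq12 E _ _; exact/H2.
Qed.

Definition occP k n (p : rel 'I_k) (s : 'S_n) (f : {ffun 'I_k -> 'I_n}) (e t : nat) : Prop :=
 (forall x y : 'I_k, x < y -> y < k - 2 -> f x < f y) /\
 (forall x : 'I_k, x < k - 2 -> f x < e) /\
 (forall x y : 'I_k, x < k - 2 -> y < k - 2 -> ~ isolated p x -> ~ isolated p y ->
     p x y -> s (f x) < s (f y)) /\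
 (forall x : 'I_k, x < k - 2 -> ~ isolated p x -> s (f x) < t).

Definition WP k n (p : rel 'I_k) (f : {ffun 'I_k -> 'I_n}) (i : 'I_n) : Prop :=
  exists x : 'I_k, x < k - 2 /\ ~ isolated p x /\ f x = i.

Lemma occA1 k n (p : rel 'I_k) : A1 (@WP k n p) (@occP k n p).
Proof.
move=> s f e t [o1 [o2 [o3 o4]]] i [x [hx [hi <-]]]; split; [exact: o2 | exact: o4].
Qed.

Lemma occA2 k n (p : rel 'I_k) : A2 (@WP k n p) (@occP k n p).
Proof.
move=> s s' f e t [o1 [o2 [o3 o4]]] hW; split => //; split => //; split.
- move=> x y hx hy ix iy hp.
  rewrite -!hW; [exact: o3 | by exists y | by exists x].
- move=> x hx ix; rewrite -hW; [exact: o4 | by exists x].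
Qed.

Lemma charP k n (hk3 : 2 < k) (p P : rel 'I_k) (HP : is_pop P)
  (Hiso : forall x, isolated P x <-> isolated p x)
  (Htop : forall x y : 'I_k, x < k - 2 -> ~ isolated p x -> k - 2 <= y -> P x y)
  (Hsub : forall x y : 'I_k, x < k - 2 -> y < k - 2 -> ~ isolated p x -> ~ isolated p y ->
            P x y = p x y)
  (o2 o1 : 'I_k) (h2 : nat_of_ord o2 = k - 2) (h1 : nat_of_ord o1 = k - 1) (c : bool)
  (Hl : if c then P o1 o2 else P o2 o1) :
  forall s : 'S_n, contains P s <->
    exists a b : 'I_n, a < b /\ inR (@occP k n p) s a (minn (s a) (s b)) /\
      (if c then s b < s a else s a < s b).
Proof.
move=> s.
have [Pirr Ptr] := HP.
have PJ : forall x y, P x y -> ~ isolated p x /\ ~ isolated p y.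
  move=> x y hxy; have hne : x != y by apply/eqP => E; move: hxy; rewrite E Pirr.
  have hne' : y != x by rewrite eq_sym.
  split => /Hiso hi.
    by have [/negP] := hi y hne'.
  by have [_ /negP] := hi x hne.
have Pnot : forall x y : 'I_k, x < k - 2 -> k - 2 <= y -> ~ P y x.
  move=> x y hx hy hyx; have [_ ix] := PJ _ _ hyx.
  by have := Ptr _ _ _ hyx (Htop _ _ hx ix hy); rewrite Pirr.
have Pboth : P o1 o2 -> P o2 o1 -> False.
  by move=> a b; have := Ptr _ _ _ a b; rewrite Pirr.
have cls : forall x : 'I_k, x < k - 2 \/ x = o2 \/ x = o1.
  move=> x; have := ltn_ord x => hx.
  case: (ltnP x (k - 2)) => hx2; first by left.
  right; case: (eqVneq (nat_of_ord x) (k - 2)) => E.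
    by left; apply: val_inj; rewrite /= E h2.
  by right; apply: val_inj; rewrite /= h1; lia.
split.
- move=> /existsP [f /forallP hf].
  have hf' : forall j m : 'I_k, (j < m -> f j < f m) /\ (P j m -> s (f j) < s (f m)).
    move=> j m; move: (hf j) => /forallP /(_ m) /andP [/implyP A /implyP B].
    by split.
  exists (f o2), (f o1); split; first by apply: (hf' _ _).1; lia.
  split; last first.
    case: c Hl => Hl; exact: (hf' _ _).2 Hl.
  exists f, (f o2), (minn (s (f o2)) (s (f o1))); split => //.
  split; [|split; [|split]].
  + move=> x y hxy hy; apply: (hf' _ _).1 hxy.
  + move=> x hx; apply: (hf' _ _).1; lia.
  + move=> x y hx hy ix iy hp; apply: (hf' _ _).2; rewrite Hsub //.
  + move=> x hx ix; rewrite leq_min; apply/andP; split; apply: (hf' _ _).2;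
      apply: Htop => //; lia.
- move=> [a [b [hab [[f [e [t [[o1' [o2' [o3' o4']]] [he ht]]]]] hc]]]].
  pose f' := [ffun x => if x == o2 then a else if x == o1 then b else f x].
  have ho12 : o1 != o2 by apply/eqP => E; move: h1 h2; rewrite E; lia.
  have fJ : forall x : 'I_k, x < k - 2 -> f' x = f x.
    move=> x hx; rewrite /f' ffunE.
    have -> : (x == o2) = false by apply/eqP => E; move: hx; rewrite E h2 ltnn.
    have -> : (x == o1) = false by apply/eqP => E; move: hx; rewrite E h1; lia.
    done.
  have f2 : f' o2 = a by rewrite /f' ffunE eqxx.
  have f1 : f' o1 = b by rewrite /f' ffunE eqxx (negbTE ho12).
  have tle : t <= s a /\ t <= s b by move: ht; rewrite leq_min => /andP.
  apply/existsP; exists f'; apply/forallP => j; apply/forallP => m.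
  apply/andP; split; apply/implyP => H.
  + case: (cls j) => [hj|[Ej|Ej]]; case: (cls m) => [hm|[Em|Em]]; try subst j; try subst m.
    * rewrite !fJ //; exact: o1'.
    * rewrite fJ // f2; have := o2' j hj; lia.
    * rewrite fJ // f1; have := o2' j hj; lia.
    * move: H; rewrite h2; lia.
    * by move: H; rewrite ltnn.
    * rewrite f2 f1 //.
    * move: H; rewrite h1; lia.
    * move: H; rewrite h1 h2; lia.
    * by move: H; rewrite ltnn.
  + case: (cls j) => [hj|[Ej|Ej]]; case: (cls m) => [hm|[Em|Em]]; try subst j; try subst m.
    * rewrite !fJ //; have [ij im] := PJ _ _ H; apply: o3' => //; rewrite -Hsub //.
    * rewrite fJ // f2; have [ij _] := PJ _ _ H; have := o4' j hj ij; lia.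
    * rewrite fJ // f1; have [ij _] := PJ _ _ H; have := o4' j hj ij; lia.
    * by exfalso; apply: (Pnot m o2) => //; rewrite h2.
    * by move: H; rewrite Pirr.
    * rewrite f2 f1; case: c Hl hc => Hl hc //; exfalso; exact: Pboth.
    * by exfalso; apply: (Pnot m o1) => //; rewrite h1; lia.
    * rewrite f1 f2; case: c Hl hc => Hl hc //; exfalso; exact: Pboth.
    * by move: H; rewrite Pirr.
Qed.

Theorem lemma2p2 (k : nat) (hk : (3 <= k)%N) (p p' : rel 'I_k)
  (Hp : is_pop p) (Hp' : is_pop p')
  (* same set I of isolated vertices *)
  (Hiso : forall x : 'I_k, isolated p x <-> isolated p' x)
  (* k-2, k-1, k are not isolated *)
  (Hnot : forall x : 'I_k, (k - 3 <= x)%N -> ~ isolated p x)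
  (* labels k-1 and k exceed every x in [k-2] \ I, in p and in p' *)
  (Htop : forall x y : 'I_k, (x < k - 2)%N -> ~ isolated p x ->
            (k - 2 <= y)%N -> p x y /\ p' x y)
  (* p and p' induce the same subposet on [k-2] \ I *)
  (Hsub : forall x y : 'I_k, (x < k - 2)%N -> (y < k - 2)%N ->
            ~ isolated p x -> ~ isolated p y -> p x y = p' x y)
  (* k <_p k-1 and k-1 <_p' k *)
  (Hlast : forall a b : 'I_k, nat_of_ord a = k.-1 -> nat_of_ord b = k.-2 ->
            p a b /\ p' b a) :
  wilf_equiv p p'.
Proof.
move=> n _.
have hk2 : k - 2 < k by lia.
have hk1 : k - 1 < k by lia.
pose o2 := Ordinal hk2. pose o1 := Ordinal hk1.
have [Hl Hl'] : p o1 o2 /\ p' o2 o1 by apply: Hlast => /=; lia.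
have C1 := @charP k n ltac:(lia) p p Hp (fun x => iff_refl _)
  (fun x y a b c => (Htop x y a b c).1) (fun x y _ _ _ _ => erefl) o2 o1 erefl erefl true Hl.
have C2 := @charP k n ltac:(lia) p p' Hp' (fun x => iff_sym (Hiso x))
  (fun x y a b c => (Htop x y a b c).2) (fun x y a b c d => esym (Hsub x y a b c d))
  o2 o1 erefl erefl false Hl'.
apply: (gen_count (@occA1 k n p) (@occA2 k n p)) => s; rewrite /avoids.
- split.
  + move=> /negP hn [a [b [hab [hin hv]]]]; apply: hn; apply/C1.
    exists a, b; split => //; split => //.
    by have -> : minn (s a) (s b) = s b by apply/minn_idPr; apply: ltnW.
  + move=> hn; apply/negP => /C1 [a [b [hab [hin hv]]]]; apply: hn.
    exists a, b; split => //; split => //.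
    by move: hin; have -> : minn (s a) (s b) = s b by apply/minn_idPr; apply: ltnW.
- split.
  + move=> /negP hn [a [b [hab [hin hv]]]]; apply: hn; apply/C2.
    exists a, b; split => //; split => //.
    by have -> : minn (s a) (s b) = s a by apply/minn_idPl; apply: ltnW.
  + move=> hn; apply/negP => /C2 [a [b [hab [hin hv]]]]; apply: hn.
    exists a, b; split => //; split => //.
    by move: hin; have -> : minn (s a) (s b) = s a by apply/minn_idPl; apply: ltnW.
Qed.
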